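(* Let $n$ be even, $V=V_1\sqcup V_2$ with $|V_1|=|V_2|=n/2$, and $0\le q<p\le 1$. Consider the complete weighted graph on $V$ with $w(u,v)=p$ for distinct $u,v$ in the same block, $w(u,v)=q$ for $u,v$ in different blocks, and $w(v,v)=0$, and the cost $c(\{A,A^\complement\})=\sum_{u\in A,v\in A^\complement}w(u,v)$ of a cut. Let $P=\{A,A^\complement\}$ be a cut of $V$, and let $\alpha_i=|A\cap V_i|/|V_i|$ and $\beta_i=|A^\complement\cap V_i|/|V_i|=1-\alpha_i$ for $i=1,2$. If $\alpha_2\ge(1-2\alpha_1)q/p$, then $c(\{A\cup V_2,A^\complement\setminus V_2\})\le c(P)$. Similarly, if $\beta_2\ge(1-2\beta_1)q/p$, then $c(\{A\setminus V_2,A^\complement\cup V_2\})\le c(P)$. *)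

(* Defs.v *)
From mathcomp Require Import all_boot all_order all_algebra.
Set Implicit Arguments. Unset Strict Implicit. Unset Printing Implicit Defensive.
Import Order.TTheory GRing.Theory Num.Theory.
Local Open Scope ring_scope.

Definition sbm_weight (R : pzRingType) (T : finType) (V1 V2 : {set T}) (p q : R)
  (u v : T) : R :=
  if u == v then 0
  else if ((u \in V1) && (v \in V1)) || ((u \in V2) && (v \in V2)) then p else q.

Definition cut_cost (R : pzRingType) (T : finType) (w : T -> T -> R) (A : {set T}) : R :=
  \sum_(u in A) \sum_(v in ~: A) w u v.

(* Main.v *)
Require Import Defs.
From mathcomp Require Import all_boot all_order all_algebra.
From mathcomp Require Import ring lra zify.
Import Order.TTheory GRing.Theory Num.Theory.
Local Open Scope ring_scope.

Lemma cost_formula (R : realFieldType) (T : finType) (V B : {set T}) (p q : R) :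
  cut_cost (sbm_weight V (~: V) p q) B =
  p * (#|B :&: V|%:R * #|~: B :&: V|%:R + #|B :&: ~: V|%:R * #|~: B :&: ~: V|%:R)
  + q * (#|B :&: V|%:R * #|~: B :&: ~: V|%:R + #|B :&: ~: V|%:R * #|~: B :&: V|%:R).
Proof.
rewrite /cut_cost (big_setID V) /= setDE.
have inner : forall u, u \in B -> \sum_(v in ~: B) sbm_weight V (~: V) p q u v =
   (if u \in V then p else q) * #|~: B :&: V|%:R
   + (if u \in V then q else p) * #|~: B :&: ~: V|%:R.
  move=> u uB; rewrite (big_setID V) /= setDE.
  rewrite (eq_bigr (fun _ => if u \in V then p else q)); last first.
    move=> v; rewrite !inE => /andP [vB vV].
    rewrite /sbm_weight; have -> : (u == v) = false.
      by apply/negbTE; apply/eqP => e; rewrite -e uB in vB.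
    by rewrite !inE vV; case: (u \in V).
  rewrite [X in _ + X](eq_bigr (fun _ => if u \in V then q else p)); last first.
    move=> v; rewrite !inE => /andP [vB vV].
    rewrite /sbm_weight; have -> : (u == v) = false.
      by apply/negbTE; apply/eqP => e; rewrite -e uB in vB.
    by rewrite !inE (negbTE vV); case: (u \in V).
  by rewrite !sumr_const !mulr_natr.
rewrite (eq_bigr (fun _ => p * #|~: B :&: V|%:R + q * #|~: B :&: ~: V|%:R)); last first.
  by move=> u; rewrite inE => /andP [uB uV]; rewrite inner // uV.
rewrite [X in _ + X](eq_bigr (fun _ => q * #|~: B :&: V|%:R + p * #|~: B :&: ~: V|%:R)); last first.
  by move=> u; rewrite !inE => /andP [uB uV]; rewrite inner // (negbTE uV).
rewrite !sumr_const -[(_ * _ + _ * _) *+ #|B :&: V|]mulr_natr -[(_ * _ + _ * _) *+ #|B :&: ~: V|]mulr_natr.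
generalize (#|B :&: V|%:R : R) (#|B :&: ~: V|%:R : R) (#|~: B :&: V|%:R : R) (#|~: B :&: ~: V|%:R : R).
by move=> x y z t; ring.
Qed.

Lemma card_split (T : finType) (V A : {set T}) :
  #|A :&: V| + #|~: A :&: V| = #|V|.
Proof. by rewrite -(cardsID A V) setIC [~: A :&: V]setIC setDE. Qed.

Theorem lemma3 (R : realFieldType) (T : finType) (n : nat) (V1 V2 : {set T})
  (p q : R) (A : {set T}) :
  ~~ odd n -> #|T| = n ->
  V1 :&: V2 = set0 -> V1 :|: V2 = [set: T] ->
  #|V1| = n./2 -> #|V2| = n./2 ->
  0 <= q -> q < p -> p <= 1 ->
  let w := sbm_weight V1 V2 p q in
  let alpha1 := #|A :&: V1|%:R / #|V1|%:R in
  let alpha2 := #|A :&: V2|%:R / #|V2|%:R in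
  let beta1 := #|~: A :&: V1|%:R / #|V1|%:R in
  let beta2 := #|~: A :&: V2|%:R / #|V2|%:R in
  (alpha2 >= (1 - 2 * alpha1) * q / p ->
     cut_cost w (A :|: V2) <= cut_cost w A) /\
  (beta2 >= (1 - 2 * beta1) * q / p ->
     cut_cost w (A :\: V2) <= cut_cost w A).
Proof.
move=> _ _ HI HU c1 c2 q0 qp _.
have E : V2 = ~: V1.
  apply/setP => x; have h1 : (x \in V1 :&: V2) = (x \in set0) by rewrite HI.
  have h2 : (x \in V1 :|: V2) = (x \in setT) by rewrite HU.
  rewrite !inE in h1 h2 *.
  by case: (x \in V1) (x \in V2) h1 h2 => [] [].
have cV : #|V2| = #|V1| by rewrite c1 c2.
subst V2 => w alpha1 alpha2 beta1 beta2.
rewrite /w !cost_formula.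
have s1 := card_split _ V1 A; have s2 := card_split _ (~: V1) A.
rewrite cV in s2.
have p0 : 0 < p by apply: le_lt_trans qp.
have X1 : (A :|: ~: V1) :&: V1 = A :&: V1
  by apply/setP => x; rewrite !inE; case: (x \in A); case: (x \in V1).
have X2 : ~: (A :|: ~: V1) :&: V1 = ~: A :&: V1
  by apply/setP => x; rewrite !inE; case: (x \in A); case: (x \in V1).
have X3 : (A :|: ~: V1) :&: ~: V1 = ~: V1
  by apply/setP => x; rewrite !inE; case: (x \in A); case: (x \in V1).
have X4 : ~: (A :|: ~: V1) :&: ~: V1 = set0
  by apply/setP => x; rewrite !inE; case: (x \in A); case: (x \in V1).
have Y1 : (A :\: ~: V1) :&: V1 = A :&: V1
  by apply/setP => x; rewrite !inE; case: (x \in A); case: (x \in V1).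
have Y2 : ~: (A :\: ~: V1) :&: V1 = ~: A :&: V1
  by apply/setP => x; rewrite !inE; case: (x \in A); case: (x \in V1).
have Y3 : (A :\: ~: V1) :&: ~: V1 = set0
  by apply/setP => x; rewrite !inE; case: (x \in A); case: (x \in V1).
have Y4 : ~: (A :\: ~: V1) :&: ~: V1 = ~: V1
  by apply/setP => x; rewrite !inE; case: (x \in A); case: (x \in V1).
rewrite X1 X2 X3 X4 Y1 Y2 Y3 Y4 cards0 /alpha1 /alpha2 /beta1 /beta2 cV.
clear alpha1 alpha2 beta1 beta2 w X1 X2 X3 X4 Y1 Y2 Y3 Y4 c1 c2 cV HI HU.
move: s1 s2.
generalize #|A :&: V1| #|~: A :&: V1| #|A :&: ~: V1| #|~: A :&: ~: V1| #|V1|.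
move=> a1 b1 a2 b2 m s1 s2.
have s1R : a1%:R + b1%:R = m%:R :> R by rewrite -s1 natrD.
have s2R : a2%:R + b2%:R = m%:R :> R by rewrite -s2 natrD.
have [m0|mpos] := eqVneq m 0%N.
  have [-> ->] : a1 = 0%N /\ b1 = 0%N by move: s1; rewrite m0; lia.
  have [-> ->] : a2 = 0%N /\ b2 = 0%N by move: s2; rewrite m0; lia.
  by rewrite m0; split => _.
have mR : (m%:R : R) != 0 by rewrite pnatr_eq0.
have pn : p != 0 by rewrite gt_eqF.
have a1p : 0 <= (a1%:R : R) := ler0n _ _.
have a2p : 0 <= (a2%:R : R) := ler0n _ _.
have b1p : 0 <= (b1%:R : R) := ler0n _ _.
have b2p : 0 <= (b2%:R : R) := ler0n _ _.
have mp : 0 <= (m%:R : R) * p by apply: mulr_ge0 => //; exact: ltW.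
split => H.
  have K' : 0 <= p * (a2%:R : R) - ((m%:R : R) - 2 * (a1%:R : R)) * q.
    have E : p * a2%:R - (m%:R - 2 * a1%:R) * q
      = m%:R * p * (a2%:R / m%:R - (1 - 2 * (a1%:R / m%:R)) * q / p).
      by field; rewrite pn mR.
    rewrite E.
    by apply: mulr_ge0 => //; rewrite subr_ge0.
  move: K' mR a1p a2p b1p b2p s1R s2R.
  generalize (a1%:R : R) (a2%:R : R) (b1%:R : R) (b2%:R : R) (m%:R : R).
  move=> x1 x2 y1 y2 M K' mR a1p a2p b1p b2p s1R s2R.
  have := mulr_ge0 b2p K'.
  have ex2 : x2 = x1 + y1 - y2 by rewrite s1R -s2R addrK.
  rewrite -s1R ex2 in K' * => Z; rewrite -subr_ge0.
  apply: (le_trans Z); rewrite -subr_ge0 (_ : (_ - _) = 0 :> R); first exact: lexx. ring.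
have K' : 0 <= p * (b2%:R : R) - ((m%:R : R) - 2 * (b1%:R : R)) * q.
  have -> : p * b2%:R - (m%:R - 2 * b1%:R) * q
    = m%:R * p * (b2%:R / m%:R - (1 - 2 * (b1%:R / m%:R)) * q / p)
    by field; rewrite pn mR.
  by apply: mulr_ge0 => //; rewrite subr_ge0.
move: K' mR a1p a2p b1p b2p s1R s2R.
generalize (a1%:R : R) (a2%:R : R) (b1%:R : R) (b2%:R : R) (m%:R : R).
move=> x1 x2 y1 y2 M K' mR a1p a2p b1p b2p s1R s2R.
have := mulr_ge0 a2p K'.
have ex2 : x2 = x1 + y1 - y2 by rewrite s1R -s2R addrK.
  rewrite -s1R ex2 in K' * => Z; rewrite -subr_ge0.
  apply: (le_trans Z); rewrite -subr_ge0 (_ : (_ - _) = 0 :> R); first exact: lexx. ring.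
Qed.
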